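(* Let $p$ be a prime and let $E$ be an elementary abelian $p$-group of rank at least $2$. Then for every $z\in E$, $$\sum_{\substack{Z\le E\\ z\in Z}}\frac{\mu(\mathbf{1},Z)}{|Z|}=0,$$ where the sum runs over subgroups $Z$ of $E$ containing $z$.
   Context: $\mu$ denotes the Möbius function of the poset of subgroups of $E$ ordered by inclusion, and $\mathbf{1}$ is the trivial subgroup. *)

(* Defs.v *)
From mathcomp Require Import all_boot all_order all_algebra all_fingroup all_solvable.
Set Implicit Arguments. Unset Strict Implicit. Unset Printing Implicit Defensive.
Import GRing.Theory.

(* The recursion is on a fuel argument; fuel #|K|.+1 always suffices since
   L \proper K implies #|L| < #|K|.  The value of mu on an interval [H,K]
   depends only on the subgroups between H and K, so it agrees with the
   Möbius function of the subgroup poset of any group E containing K. *)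
Fixpoint subgroup_mobius_rec (gT : finGroupType) (n : nat) (H K : {set gT}) : int :=
  match n with
  | 0 => 0%R
  | n'.+1 =>
      if H == K then 1%R
      else if H \subset K then
        (- (\sum_(L : {group gT} | (H \subset L) && (L \proper K))
              subgroup_mobius_rec n' H L))%R
      else 0%R
  end.

Definition subgroup_mobius (gT : finGroupType) (H K : {set gT}) : int :=
  subgroup_mobius_rec #|K|.+1 H K.

(* Main.v *)
Require Import Defs.
From mathcomp Require Import all_boot all_order all_algebra all_fingroup all_solvable.
From mathcomp Require Import all_field all_character.
Import GRing.Theory Num.Theory.
Local Open Scope ring_scope.

Lemma mob_fuel (gT : finGroupType) n m (H K : {set gT}) :
  (#|K| < n)%N -> (#|K| < m)%N -> subgroup_mobius_rec n H K = subgroup_mobius_rec m H K.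
Proof.
elim: n m K => [|n IH] [|m] K //= hn hm; try by rewrite ltn0 in hn hm.
case: ifP => // _; case: ifP => // _; congr (- _).
apply: eq_bigr => L /andP[_ /proper_card hL]; apply: IH.
  exact: leq_trans hL hn.
exact: leq_trans hL hm.
Qed.

Lemma mob_rec (gT : finGroupType) (K : {group gT}) : K :!=: 1%g ->
  subgroup_mobius 1%g (K : {set gT}) =
  - \sum_(L : {group gT} | (L \subset K) && (L != K)) subgroup_mobius 1%g (L : {set gT}).
Proof.
move=> K1; rewrite /subgroup_mobius /= eq_sym (negbTE K1) sub1G; congr (- _).
apply: eq_big => [L|L /andP[_ /proper_card hL]]; last by rewrite (@mob_fuel _ _ #|L|.+1).

by rewrite sub1G /= properEneq andbC.
Qed.

Lemma mob_sum (gT : finGroupType) (K : {group gT}) :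
  \sum_(Z : {group gT} | Z \subset K) subgroup_mobius 1%g (Z : {set gT}) = (K :==: 1%g)%:R.
Proof.
rewrite (bigD1 K) //=.
case: eqP => [K1|/eqP K1].
  rewrite /subgroup_mobius /= {1}K1 eqxx big1 ?addr0 //= => Z /andP[ZK ZnK].
  case/eqP: ZnK; apply: val_inj => /=.
  by apply/eqP; rewrite eqEsubset ZK K1 sub1G.
by rewrite mob_rec // addNr.
Qed.

Lemma mob_sumC (gT : finGroupType) (K : {group gT}) :
  \sum_(Z : {group gT} | Z \subset K) ((subgroup_mobius 1%g (Z : {set gT}))%:~R : algC)
   = (K :==: 1%g)%:R.
Proof.
have := congr1 (fun x : int => (x%:~R : algC)) (@mob_sum _ K).
rewrite rmorph_sum /= => ->; by case: (K :==: 1%g).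
Qed.

Section Chars.
Variables (gT : finGroupType) (E : {group gT}).
Hypothesis abE : abelian E.

Lemma sum_chi x : x \in E -> \sum_(i : Iirr E) 'chi[E]_i x = #|E|%:R *+ (x == 1%g).
Proof.
move=> Ex; rewrite -cfRegE cfReg_sum sum_cfunE; apply: eq_bigr => i _.
by rewrite cfunE (lin_char1 (char_abelianP E abE i)) mul1r.
Qed.

Lemma sub_sum (Z : {group gT}) (i : Iirr E) : Z \subset E ->
  \sum_(y in Z) 'chi[E]_i y = #|Z|%:R *+ (Z \subset cfker 'chi[E]_i).
Proof.
move=> sZE; have lin := char_abelianP E abE i.
case: (boolP (Z \subset cfker _)) => [sZK|nsZK].
  rewrite -sumr_const; apply: eq_bigr => y Zy.
  have := subsetP sZK y Zy; rewrite cfkerEchar ?irr_char // inE => /andP[_ /eqP ->].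
  exact: lin_char1.
have [y0 Zy0 Ky0] : exists2 y0, y0 \in Z & y0 \notin cfker 'chi[E]_i.
  exact/subsetPn.
have Ey0 := subsetP sZE y0 Zy0.
have c1 : 'chi[E]_i y0 != 1.
  apply: contra Ky0 => /eqP c1; rewrite cfkerEchar ?irr_char // inE Ey0 c1.
  rewrite /= eq_sym; apply/eqP; exact: (lin_char1 lin).
rewrite mulr0n; set s := \sum_(y in Z) _.
have es : s = 'chi[E]_i y0 * s.
  rewrite /s big_distrr /= (reindex_inj (mulgI y0)) /=.
  apply: eq_big => [y|y Zy]; first by rewrite groupMl.
  by rewrite groupMl // in Zy; rewrite (lin_charM lin Ey0 (subsetP sZE _ Zy)).
have : (1 - 'chi[E]_i y0) * s = 0 by rewrite mulrBl mul1r -es subrr.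
by move/eqP; rewrite mulf_eq0 subr_eq0 eq_sym (negbTE c1) /= => /eqP.
Qed.

Lemma key (Z : {group gT}) z : Z \subset E -> z \in E ->
  #|E|%:R *+ (z \in Z) = #|Z|%:R * \sum_(i : Iirr E) 'chi[E]_i z *+ (Z \subset cfker 'chi[E]_i) :> algC.
Proof.
move=> sZE Ez; have lin := char_abelianP E abE.
rewrite big_distrr /=.
have -> : \sum_(i : Iirr E) #|Z|%:R * ('chi[E]_i z *+ (Z \subset cfker 'chi[E]_i))
   = \sum_(i : Iirr E) \sum_(y in Z) 'chi[E]_i (z * y)%g.
  apply: eq_bigr => i _; rewrite mulrnAr [_ * _]mulrC -mulrnAr -sub_sum // big_distrr /=.
  by apply: eq_bigr => y Zy; rewrite (lin_charM (lin i) Ez (subsetP sZE _ Zy)).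
rewrite exchange_big /=.
rewrite (eq_bigr (fun y => #|E|%:R *+ (y == z^-1)%g)); last first.
  move=> y Zy; rewrite sum_chi ?groupM ?(subsetP sZE _ Zy) //.
  by rewrite -(inj_eq (mulgI z^-1)%g) mulKg mulg1.
rewrite -(groupV Z z); case: (boolP (z^-1 \in Z)%g) => Zz.
  rewrite (bigD1 z^-1%g) //= eqxx big1 ?addr0 // => y /andP[_ /negbTE ->].
  by rewrite mulr0n.
rewrite big1 // => y Zy; case: eqP => // yz; case/negP: Zz; by rewrite -yz.
Qed.
End Chars.

Lemma ker_nt (p : nat) (gT : finGroupType) (E : {group gT}) (i : Iirr E) :
  (p.-abelem E)%g -> (2 <= 'r(E)%g)%N -> cfker 'chi[E]_i :!=: 1%g.
Proof.
move=> abelE rE; apply/negP => /eqP k1.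
have abE := abelem_abelian abelE.
have : cyclic 'Z(E) by apply: (irr_faithful_center (i:=i)); rewrite /cfaithful k1.
rewrite (center_idP abE) (abelem_cyclic abelE) -(rank_abelem abelE).
by rewrite leqNgt rE.
Qed.

Local Close Scope ring_scope.

Theorem lemma2p5 (p : nat) (gT : finGroupType) (E : {group gT}) :
  prime p -> (p.-abelem E)%g -> 2 <= 'r(E)%g ->
  forall z : gT, z \in E ->
  (\sum_(Z : {group gT} | (Z \subset E) && (z \in Z))
      ((subgroup_mobius 1%g (Z : {set gT}))%:~R / (#|Z|%:R) : rat) = 0)%R.
Proof.
Local Open Scope ring_scope.
move=> pp abelE rE z Ez; have abE := abelem_abelian abelE.
apply: (fmorph_inj (@ratr algC)); rewrite rmorph0 rmorph_sum /=.
under eq_bigr do rewrite fmorph_div /= ratr_int ratr_nat.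
have E0 : (#|E|%:R : algC) != 0 by rewrite pnatr_eq0 -lt0n cardG_gt0.
apply: (mulfI E0); rewrite mulr0 big_distrr /=.
transitivity (\sum_(Z : {group gT} | Z \subset E) (subgroup_mobius 1%g (Z : {set gT}))%:~R *
    \sum_(i : Iirr E) 'chi[E]_i z *+ (Z \subset cfker 'chi[E]_i) : algC).
  rewrite [RHS](bigID (fun Z : {group gT} => z \in Z)) /= [X in _ = _ + X]big1 ?addr0.
    apply: eq_bigr => Z /andP[sZE Zz].
    have Z0 : (#|Z|%:R : algC) != 0 by rewrite pnatr_eq0 -lt0n cardG_gt0.
    apply: (mulfI Z0); rewrite [RHS]mulrCA -(@key _ _ abE _ _ sZE Ez) Zz mulr1n.
    by rewrite mulrCA [#|Z|%:R * _]mulrC divfK // mulrC.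
  move=> Z /andP[sZE Zz].
  have Z0 : (#|Z|%:R : algC) != 0 by rewrite pnatr_eq0 -lt0n cardG_gt0.
  have := @key _ _ abE _ _ sZE Ez; rewrite (negbTE Zz) mulr0n => /esym/eqP.
  by rewrite mulf_eq0 (negbTE Z0) /= => /eqP ->; rewrite mulr0.
under eq_bigr do rewrite big_distrr /=.
rewrite exchange_big /= big1 // => i _.
rewrite (eq_bigr (fun Z : {group gT} => 'chi[E]_i z *
   ((subgroup_mobius 1%g (Z : {set gT}))%:~R *+ (Z \subset cfker 'chi[E]_i)))); last first.
  by move=> Z _; rewrite mulrnAr mulrC -mulrnAr.
rewrite -big_distrr /=; under eq_bigr do rewrite mulrb. rewrite -big_mkcondr /=.
rewrite (eq_bigl (fun Z : {group gT} => Z \subset cfker 'chi[E]_i)); last first.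
  move=> Z; apply/andP/idP => [[] //|sZK]; split=> //.
  exact: subset_trans sZK (cfker_sub _).
by rewrite mob_sumC (negbTE (@ker_nt _ _ _ i abelE rE)) mulr0.
Qed.
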